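(* Let $X\subseteq\mathbb{N}$ be finite, $\omega^{n+3}$-large and exp-sparse, and let $d\in\mathbb{N}$ with $d\le\min X$. Then $X$ admits an $(\omega^n,d)$-grouping: for every colouring $P:[X]^2\to2$ there is an $(\omega^n,d)$-grouping for $P$.
   Context: Ordinals below $\omega^\omega$ are in Cantor normal form; a natural number $d$ is the ordinal $\omega^0\cdot d$; $\omega^j\cdot m$ = sum of $m$ copies of $\omega^j$. For $m\in\mathbb{N}$: $0[m]=0$, $(\beta+1)[m]=\beta$, $(\beta+\omega^{n})[m]=\beta+\omega^{n-1}\cdot m$ for $n\ge1$. A finite $X=\{x_0<\dots<x_{\ell-1}\}\subseteq\mathbb{N}$ is $\alpha$-large if $\alpha[x_0]\cdots[x_{\ell-1}]=0$ (so $d$-large means having at least $d$ elements). A set $X$ with $\min X\ge3$ is exp-sparse if $x<y$ in $X$ implies $4^x<y$. For $P:[X]^2\to2$, a finite sequence $\langle F_i\subseteq X:i<\ell\rangle$ of finite sets is an $(\alpha,\beta)$-grouping for $P$ if: (1) $\max F_i<\min F_j$ for $i<j<\ell$; (2) each $F_i$ is $\alpha$-large; (3) $\{\max F_i:i<\ell\}$ is $\beta$-large; (4) for all $i<j<\ell$, $x,x'\in F_i$, $y,y'\in F_j$: $P(x,y)=P(x',y')$. *)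

(* Defs.v *)
From mathcomp Require Import all_boot.
Set Implicit Arguments. Unset Strict Implicit. Unset Printing Implicit Defensive.

(* Ordinals below omega^omega in Cantor normal form
   alpha = omega^{e_1} + ... + omega^{e_k} with e_1 >= ... >= e_k
   are represented by the list of exponents in REVERSE order
   [:: e_k; ...; e_1] (smallest, i.e. last, term first). *)
Definition ord := seq nat.

Definition cnf (a : ord) : bool := sorted leq a.

Definition oexp (j : nat) : ord := [:: j].
Definition onat (d : nat) : ord := nseq d 0.

(* fundamental sequence: 0[m] = 0, (b+1)[m] = b,
   (b + omega^(n+1))[m] = b + omega^n * m *)
Definition fs (a : ord) (m : nat) : ord :=
  match a with
  | [::] => [::]
  | 0 :: b => b
  | n.+1 :: b => nseq m n ++ b
  end.

(* finite subsets of N are represented by strictly increasing lists *)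
Definition finset_nat (X : seq nat) : bool := sorted ltn X.

Definition large (a : ord) (X : seq nat) : bool := foldl fs a X == [::].

Definition minX (X : seq nat) : nat := head 0 X.
Definition maxX (X : seq nat) : nat := last 0 X.

Definition exp_sparse (X : seq nat) : Prop :=
  (forall x, x \in X -> 3 <= x) /\
  (forall x y, x \in X -> y \in X -> x < y -> 4 ^ x < y).

(* (alpha,beta)-grouping for P : [X]^2 -> 2 (P x y read for x < y) *)
Definition grouping (a b : ord) (X : seq nat) (P : nat -> nat -> bool)
    (Fs : seq (seq nat)) : Prop :=
  (forall i, i < size Fs -> finset_nat (nth [::] Fs i) /\
                            {subset nth [::] Fs i <= X}) /\
  (forall i j, i < j -> j < size Fs ->
     maxX (nth [::] Fs i) < minX (nth [::] Fs j)) /\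
  (forall i, i < size Fs -> large a (nth [::] Fs i)) /\
  large b (map maxX Fs) /\
  (forall i j, i < j -> j < size Fs ->
     forall x x' y y', x \in nth [::] Fs i -> x' \in nth [::] Fs i ->
       y \in nth [::] Fs j -> y' \in nth [::] Fs j -> P x y = P x' y').

(* Main.v *)
Require Import Defs.
From mathcomp Require Import all_boot zify.
Set Implicit Arguments. Unset Strict Implicit. Unset Printing Implicit Defensive.

Lemma foldl_nil Y : foldl fs [::] Y = [::].
Proof. by elim: Y. Qed.

Definition cnt (j : nat) (a : seq nat) := count_mem j a.

Lemma cnt_fs h t y j :
  cnt j (fs (h :: t) y) + (h == j) =
  cnt j (h :: t) + (if h is e.+1 then (e == j) * y else 0).
Proof.
rewrite /cnt /=; case: h => [|e] /=; first lia.
rewrite count_cat count_nseq /=; lia.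
Qed.

Lemma sorted_min h t z : sorted leq (h :: t) -> z \in h :: t -> h <= z.
Proof.
move=> /= Hp; rewrite inE => /orP [/eqP -> //|Hz].
by have /allP := order_path_min leq_trans Hp; apply.
Qed.

Lemma cnt_below h t j : sorted leq (h :: t) -> j < h -> cnt j (h :: t) = 0.
Proof.
move=> Hs Hj; apply/count_memPn/negP => Hin.
by have := sorted_min Hs Hin; lia.
Qed.

Lemma fs_sorted a y : sorted leq a -> sorted leq (fs a y).
Proof.
case: a => [//|[|e] t] /= Hp; first exact: path_sorted Hp.
have Ha := order_path_min leq_trans Hp.
rewrite sorted_pairwise; last exact: leq_trans.
rewrite pairwise_cat; apply/and3P; split.
- apply/allrelP => u v; rewrite mem_nseq => /andP [_ /eqP ->] Hv.
  by have /allP := Ha; move/(_ v Hv); lia.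
- elim: y => [//|y IH] /=; rewrite IH andbT; apply/allP => u; rewrite mem_nseq => /andP [_ /eqP ->] //.
- by rewrite -sorted_pairwise; [exact: path_sorted Hp| exact: leq_trans].
Qed.

Lemma size_fs h t y : size (fs (h :: t) y) <= size t + y.
Proof. case: h => [|e] /=; rewrite ?size_cat ?size_nseq; lia. Qed.

Definition olt (g d : seq nat) :=
  exists k, cnt k g < cnt k d /\ forall j, k < j -> cnt j g = cnt j d.
Definition ole (g d : seq nat) := (forall j, cnt j g = cnt j d) \/ olt g d.

Lemma olt_ole_trans a b c : olt a b -> ole b c -> olt a c.
Proof.
move=> [k1 [H1 H1']] [Hbc|[k2 [H2 H2']]].
  exists k1; split; first by rewrite -Hbc.
  by move=> j Hj; rewrite H1' // Hbc.
case: (ltngtP k1 k2) => Hk.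
- exists k2; split; first by rewrite H1'.
  by move=> j Hj; rewrite H1' ?H2' //; lia.
- exists k1; split; first by rewrite -H2'.
  by move=> j Hj; rewrite H1' ?H2' //; lia.
- subst k2; exists k1; split; first lia.
  by move=> j Hj; rewrite H1' ?H2'.
Qed.

Lemma eq_cnt_sorted a b : sorted leq a -> sorted leq b ->
  (forall j, cnt j a = cnt j b) -> a = b.
Proof.
move=> Ha Hb Hc; apply: (sorted_eq leq_trans anti_leq Ha Hb).
by apply/allP => x _ /=; apply/eqP; exact: (Hc x).
Qed.

Lemma cnt_nil a : (forall j, cnt j a = 0) -> a = [::].
Proof.
case: a => [//|h t] H; have := H h; rewrite /cnt /= eqxx; lia.
Qed.

Lemma cnt_fs_other h t y j : j != h -> j.+1 != h ->
  cnt j (fs (h :: t) y) = cnt j (h :: t).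
Proof.
move=> H1 H2; have := cnt_fs h t y j.
have -> : (h == j) = false by apply/negbTE; rewrite eq_sym.
case: h H1 H2 => [|e] H1 H2 /=; first lia.
have -> : (e == j) = false by apply/negbTE; move: H2; rewrite eq_sym eqSS.
lia.
Qed.

Lemma cnt_fs_h h t y : (cnt h (fs (h :: t) y)).+1 = cnt h (h :: t).
Proof.
have := cnt_fs h t y h; rewrite eqxx; case: h => [|e] /=; first lia.
have -> : (e == e.+1) = false by apply/negbTE; lia.
lia.
Qed.

Lemma cnt_fs_pred e t y : cnt e (fs (e.+1 :: t) y) = cnt e (e.+1 :: t) + y.
Proof.
have := cnt_fs e.+1 t y e; rewrite eqxx /=.
have -> : (e.+1 == e) = false by apply/negbTE; lia.
lia.
Qed.

Lemma fs_olt h t y : sorted leq (h :: t) -> olt (fs (h :: t) y) (h :: t).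
Proof.
move=> Hs; exists h; split.
  by have := cnt_fs_h h t y; lia.
move=> j Hj; apply: cnt_fs_other; apply/eqP; lia.
Qed.

Lemma olt_fs g d y : sorted leq d -> olt g d -> size g < y -> ole g (fs d y).
Proof.
case: d => [|h t] Hs [k [Hk Hk']] Hsz.
  by move: Hk; rewrite /cnt /=.
case: (ltngtP k h) => Hkh.
- by move: Hk; rewrite cnt_below.
- right; exists k; split.
    by rewrite cnt_fs_other //; apply/eqP; lia.
  move=> j Hj; rewrite cnt_fs_other ?Hk' //; apply/eqP; lia.
- subst k.
  have Hab j : h < j -> cnt j g = cnt j (fs (h :: t) y).
    by move=> Hj; rewrite cnt_fs_other ?Hk' //; apply/eqP; lia.
  have Hh := cnt_fs_h h t y.
  case: (ltngtP (cnt h g) (cnt h (fs (h :: t) y))) => Hc.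
  + right; exists h; split => //.
  + exfalso; lia.
  + case: h Hs Hk Hh Hc Hab Hk' => [|e] Hs Hk Hh Hc Hab Hk'.
      left => j; case: j => [|j]; first by [].
      by apply: Hab.
    right; exists e; split.
      rewrite cnt_fs_pred.
      have : cnt e g <= size g := count_size _ _. lia.
    move=> j Hj; case: (ltngtP j e.+1) => Hj2; first lia.
      by apply: Hab.
    by subst j.
Qed.

Definition R2 (a b : nat) := 2 * a < b.
Lemma R2_trans : transitive R2.
Proof. rewrite /R2 => b a c; lia. Qed.

Lemma LM Y : sorted R2 Y -> forall g d, sorted leq g -> sorted leq d -> ole g d ->
  (forall z, z \in Y -> size g < z) ->
  foldl fs d Y = [::] -> foldl fs g Y = [::].
Proof.
elim: Y => [|y Y IH] HY g d Hg Hd Hle Hn /=.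
  move=> Hd0; subst d; case: Hle => [Hc|[k [Hk _]]].
    by apply: cnt_nil.
  by move: Hk; rewrite /cnt.
case: g Hg Hle Hn => [|h t] Hg Hle Hn; first by rewrite foldl_nil.
case: d Hd Hle => [|hd td] Hd Hle.
  exfalso; case: Hle => [Hc|[k [Hk _]]]; last by move: Hk; rewrite /cnt.
  by have := Hc h; rewrite /cnt /= eqxx.
move=> HF; apply: (IH (path_sorted HY) _ (fs (hd :: td) y)) => //.
- exact: fs_sorted.
- exact: fs_sorted.
- case: Hle => [Hc|Hlt].
    by rewrite (eq_cnt_sorted Hg Hd Hc); left.
  right; apply: (olt_ole_trans (fs_olt y Hg)).
  by apply: olt_fs => //; apply: Hn; rewrite inE eqxx.
- move=> z Hz; have Hy := Hn y (mem_head _ _).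
  have /allP := order_path_min R2_trans HY; move/(_ z Hz); rewrite /R2 => Hz2.
  have := size_fs h t y; move: Hy => /=; lia.
Qed.


Definition osum (a b : seq nat) := sort leq (a ++ b).

Lemma osum_sorted a b : sorted leq (osum a b).
Proof. exact: sort_sorted leq_total _. Qed.

Lemma cnt_osum j a b : cnt j (osum a b) = cnt j a + cnt j b.
Proof.
rewrite /cnt /osum -count_cat; apply/permP.
by rewrite perm_sort.
Qed.

Lemma size_osum a b : size (osum a b) = size a + size b.
Proof. by rewrite size_sort size_cat. Qed.

Lemma osumC a b : osum a b = osum b a.
Proof.
apply: eq_cnt_sorted; try exact: osum_sorted.
by move=> j; rewrite !cnt_osum addnC.
Qed.

Lemma key_ole h t b y : sorted leq (h :: t) -> sorted leq b ->
  ole (osum (fs (h :: t) y) b) (fs (osum (h :: t) b) y).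
Proof.
move=> Ha Hb.
case E: (osum (h :: t) b) => [|m s].
  by move: (size_osum (h :: t) b); rewrite E.
have Hs : sorted leq (m :: s) by rewrite -E osum_sorted.
have Hm : m \in (h :: t) ++ b by rewrite -(mem_sort leq) -/(osum _ _) E mem_head.
have Hmin z : z \in (h :: t) ++ b -> m <= z.
  by move=> Hz; apply: (sorted_min Hs); rewrite -E /osum mem_sort.
have HcE j : cnt j (m :: s) = cnt j (h :: t) + cnt j b by rewrite -E cnt_osum.
case Hall: (all (fun z => h <= z) b).
- have Hmh : m = h.
    apply/eqP; rewrite eqn_leq Hmin ?mem_cat ?mem_head //=.
    move: Hm; rewrite mem_cat => /orP [Hm|Hm].
      exact: sorted_min Ha Hm.
    by move/allP: Hall => /(_ m Hm).
  subst m; left => j; rewrite cnt_osum.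
  have H1 := cnt_fs h t y j; have H2 := cnt_fs h s y j; have := HcE j.
  lia.
- move/negbT: Hall; rewrite -has_predC => /hasP [z Hz /= Hzh].
  have Hmz : m <= z by apply: Hmin; rewrite mem_cat Hz orbT.
  have Hmh : m < h by lia.
  have Ho j : m < j -> cnt j (fs (m :: s) y) = cnt j (m :: s).
    by move=> Hj; apply: cnt_fs_other; apply/eqP; lia.
  right; exists h; split.
    rewrite cnt_osum Ho // HcE.
    have /= := cnt_fs_h h t y; lia.
  move=> j Hj; rewrite cnt_osum Ho ?HcE; last lia.
  by rewrite cnt_fs_other //; apply/eqP; lia.
Qed.

Lemma NS_step a b y Y : sorted leq a -> sorted leq b -> a != [::] ->
  size a + size b < y -> sorted R2 (y :: Y) ->
  foldl fs (osum a b) (y :: Y) = [::] -> foldl fs (osum (fs a y) b) Y = [::].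
Proof.
case: a => [//|h t] Ha Hb _ Hsz HY HF.
apply: (LM (path_sorted HY) (osum_sorted _ _) (fs_sorted _ (osum_sorted _ _)) (key_ole y Ha Hb) _ HF).
move=> z Hz; rewrite size_osum.
have /allP := order_path_min R2_trans HY; move/(_ z Hz); rewrite /R2 => Hz2.
have := size_fs h t y; move: Hsz => /=; lia.
Qed.

Lemma NS Y : sorted R2 Y -> forall (p : pred nat) a b, sorted leq a -> sorted leq b ->
  (forall z, z \in Y -> size a + size b < z) ->
  foldl fs (osum a b) Y = [::] ->
  foldl fs a (filter p Y) = [::] \/ foldl fs b (filter (predC p) Y) = [::].
Proof.
elim: Y => [|y Y IH] HY p a b Ha Hb Hn /=.
  move=> H0; left; have := size_osum a b; rewrite H0.
  by case: a {Ha Hn H0}.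
have HY' := path_sorted HY.
have Hn' z : z \in Y -> size a + size b + y < z.
  move=> Hz; have /allP := order_path_min R2_trans HY; move/(_ z Hz); rewrite /R2 => Hz2.
  have := Hn y (mem_head _ _); lia.
have Hy := Hn y (mem_head _ _).
case Hp: (p y) => /= HF.
- case: a Ha Hn Hn' Hy HF => [|h t] Ha Hn Hn' Hy HF; first by left; rewrite foldl_nil.
  have := NS_step Ha Hb isT Hy HY HF => HF'.
  case: (IH HY' p (fs (h :: t) y) b (fs_sorted y Ha) Hb _ HF') => [z Hz||]; [|by left|by right].
  have := size_fs h t y; have := Hn' z Hz; move=> /=; lia.
- case: b Hb Hn Hn' Hy HF => [|h t] Hb Hn Hn' Hy HF; first by right; rewrite foldl_nil.
  rewrite osumC in HF.
  have Hy2 : size (h :: t) + size a < y by lia.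
  have := NS_step Hb Ha isT Hy2 HY HF => HF'.
  rewrite osumC in HF'.
  case: (IH HY' p a (fs (h :: t) y) Ha (fs_sorted y Hb) _ HF') => [z Hz||]; [|by left|by right].
  have := size_fs h t y; have := Hn' z Hz; move=> /=; lia.
Qed.

Lemma nseq_sorted k m : sorted leq (nseq k m).
Proof. elim: k => [//|k IH] /=; case: k IH => //= k ->; rewrite leqnn. done. Qed.

Lemma PHr m (col : nat -> nat) r Y : 0 < r -> sorted R2 Y ->
  (forall z, z \in Y -> col z < r) -> (forall z, z \in Y -> r < z) ->
  foldl fs (nseq r m) Y = [::] ->
  exists c, foldl fs [:: m] [seq z <- Y | col z == c] = [::].
Proof.
elim: r Y => [//|r IH] Y _ HY Hc Hn HF.
case: r IH Hc Hn HF => [|r] IH Hc Hn HF.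
  exists 0; rewrite (@eq_in_filter _ _ predT); first by rewrite filter_predT.
  by move=> z Hz; have := Hc z Hz; rewrite /=; lia.
have Eq : nseq r.+2 m = osum [:: m] (nseq r.+1 m).
  by rewrite /osum /= sorted_sort //; [exact: leq_trans|exact: (nseq_sorted r.+2 m)].
rewrite Eq in HF.
have Hn2 z : z \in Y -> size [:: m] + size (nseq r.+1 m) < z.
  by move=> Hz; rewrite size_nseq /=; have := Hn z Hz; lia.
case: (NS HY (fun z => col z == r.+1) (isT : sorted leq [:: m]) (nseq_sorted _ _) Hn2 HF) => H.
  by exists r.+1.
set Y2 := filter (predC (fun z => col z == r.+1)) Y.
have Hc2 z : z \in Y2 -> col z < r.+1.
  rewrite mem_filter => /andP [/= H1 H2]; have := Hc z H2; move: H1; lia.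
have Hn3 z : z \in Y2 -> r.+1 < z.
  rewrite mem_filter => /andP [/= H1 H2]; have := Hn z H2; lia.
have [c Hcc] := IH Y2 isT (sorted_filter R2_trans _ HY) Hc2 Hn3 H.
have Hcr : c != r.+1.
  apply/eqP => Ec; move: Hcc; rewrite Ec /Y2 -filter_predI (@eq_in_filter _ _ pred0).
    by rewrite filter_pred0.
  by move=> z _ /=; rewrite andbN.
exists c; have -> : [seq z <- Y | col z == c] = [seq z <- Y2 | col z == c]; last by [].
rewrite /Y2 -filter_predI; apply: eq_in_filter => z Hz /=.
case E: (col z == c) => //=.
by move/eqP: E => ->; rewrite Hcr.
Qed.

Lemma PH m (col : nat -> nat) r y Y : 0 < r -> sorted R2 (y :: Y) ->
  (forall z, z \in Y -> col z < r) -> r <= y ->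
  foldl fs [:: m.+1] (y :: Y) = [::] ->
  exists c, foldl fs [:: m] [seq z <- Y | col z == c] = [::].
Proof.
move=> Hr HY Hc Hry HF.
have Hn z : z \in Y -> r < z.
  move=> Hz; have /allP := order_path_min R2_trans HY; move/(_ z Hz); rewrite /R2; lia.
apply: (PHr Hr (path_sorted HY) Hc Hn).
rewrite /= cats0 in HF.
apply: (LM (path_sorted HY) (nseq_sorted _ _) (nseq_sorted _ _) _ _ HF).
- case: (ltngtP r y) => H; last by subst; left.
    right; exists m; split.
      by rewrite /cnt !count_nseq /= eqxx; lia.
    by move=> j Hj; rewrite /cnt !count_nseq /=; have -> : (m == j) = false by apply/negbTE; lia.
  lia.
- by move=> z Hz; rewrite size_nseq; apply: Hn.
Qed.


Lemma fs_cat a b y : a != [::] -> fs (a ++ b) y = fs a y ++ b.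
Proof. by case: a => [|[|e] t] //= _; rewrite catA. Qed.

Lemma split_large a b Y : a != [::] -> foldl fs (a ++ b) Y = [::] ->
  exists Y1 Y2, Y = Y1 ++ Y2 /\ foldl fs a Y1 = [::] /\ foldl fs b Y2 = [::].
Proof.
elim: Y a => [|y Y IH] a Ha /=.
  by case: a Ha.
rewrite fs_cat //; case E: (fs a y) => [|h t] HF.
  by exists [:: y], Y; rewrite /= E.
have [Y1 [Y2 [-> [H1 H2]]]] := IH (h :: t) isT HF.
by exists (y :: Y1), Y2; rewrite /= E.
Qed.

Lemma blocks e k Y : foldl fs (nseq k e) Y = [::] ->
  exists Bs W, size Bs = k /\ (forall B, B \in Bs -> foldl fs [:: e] B = [::]) /\
    Y = flatten Bs ++ W.
Proof.
elim: k Y => [|k IH] Y HF.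
  by exists [::], Y.
have [Y1 [Y2 [-> [H1 H2]]]] := @split_large [:: e] (nseq k e) Y isT HF.
have [Bs [W [Hs [HB ->]]]] := IH Y2 H2.
exists (Y1 :: Bs), W; split; first by rewrite /= Hs.
split; last by rewrite /= catA.
by move=> B; rewrite inE => /orP [/eqP ->|]; [|apply: HB].
Qed.

Definition Rx (a b : nat) := 4 ^ a < b.
Lemma Rx_ltn a b : Rx a b -> a < b.
Proof. rewrite /Rx => H; have := ltn_expl a (isT : 1 < 4); lia. Qed.
Lemma two_lt_four a : 2 * a < 4 ^ a.
Proof. elim: a => [//|a IH]; rewrite expnS; lia. Qed.
Lemma Rx_R2 a b : Rx a b -> R2 a b.
Proof. rewrite /Rx /R2 => H; have := two_lt_four a; lia. Qed.
Lemma Rx_trans : transitive Rx.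
Proof.
rewrite /Rx => b a c H1 H2; have := ltn_expl b (isT : 1 < 4); lia.
Qed.

Fixpoint bin (s : seq bool) : nat := if s is b :: s' then b + 2 * bin s' else 0.
Lemma bin_lt s : bin s < 2 ^ size s.
Proof. elim: s => [//|b s IH] /=; rewrite expnS; case: b; lia. Qed.
Lemma bin_inj s t : size s = size t -> bin s = bin t -> s = t.
Proof.
elim: s t => [|b s IH] [|c t] //= [Hsz] Hb.
have Hbc : b = c by case: b c Hb => [] [] /=; lia.
subst c; congr cons; apply: IH => //; case: b Hb => /=; lia.
Qed.

Lemma path_last x s : path ltn x s -> forall u, u \in x :: s -> u <= last x s.
Proof.
elim: s x => [|y s IH] x /=.
  by move=> _ u; rewrite inE => /eqP ->.
move=> /andP [Hxy Hp] u; rewrite inE => /orP [/eqP ->|Hu].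
  have := IH y Hp y (mem_head _ _); lia.
exact: IH.
Qed.

Lemma large_nonempty k F : foldl fs [:: k] F = [::] -> F != [::].
Proof. by case: F. Qed.

Lemma sorted_cat_rel (r : rel nat) s1 s2 : transitive r -> sorted r (s1 ++ s2) ->
  [/\ sorted r s1, sorted r s2 & forall x y, x \in s1 -> y \in s2 -> r x y].
Proof.
move=> Ht; rewrite !sorted_pairwise // pairwise_cat => /and3P [Ha H1 H2].
by split => // x y Hx Hy; move/allrelP: Ha; apply.
Qed.

Section G.
Variables (n : nat) (P : nat -> nat -> bool).

Lemma G Bs : forall U p,
  (forall u, u \in U -> 0 < u <= p) -> uniq U -> size Bs <= p ->
  sorted Rx (flatten Bs) -> (forall z, z \in flatten Bs -> 4 ^ p < z) ->
  (forall B, B \in Bs -> foldl fs [:: n.+2] B = [::]) ->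
  exists Fs, size Fs = size Bs /\
   (forall i, i < size Bs -> {subset nth [::] Fs i <= nth [::] Bs i} /\
      sorted ltn (nth [::] Fs i) /\ foldl fs [:: n] (nth [::] Fs i) = [::] /\
      (forall u y y', u \in U -> y \in nth [::] Fs i -> y' \in nth [::] Fs i -> P u y = P u y')) /\
   (forall i j, i < j -> j < size Bs -> forall x x' y y',
      x \in nth [::] Fs i -> x' \in nth [::] Fs i ->
      y \in nth [::] Fs j -> y' \in nth [::] Fs j -> P x y = P x' y').
Proof.
elim: Bs => [|B Bs IH] U p HU Hu Hsz Hs H4 HB.
  by exists [::]; split.
have HBl := HB B (mem_head _ _).
case: B HBl HB Hs H4 Hsz => [//|b B0] HBl HB Hs H4 Hsz.
have [HsB HsR Hrel] := sorted_cat_rel Rx_trans Hs.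
have HsBl : sorted ltn (b :: B0) := sub_sorted Rx_ltn HsB.
have Hlast := path_last HsBl.
set p' := last b B0.
have H4B z : z \in b :: B0 -> 4 ^ p < z by move=> Hz; apply: H4; rewrite -[X in _ \in X]/((b :: B0) ++ flatten Bs) mem_cat Hz.
have Hp4 := ltn_expl p (isT : 1 < 4).
have Hbp : p < b by have := H4B b (mem_head _ _); lia.
have Hbp' : b <= p' by apply: Hlast; exact: mem_head.
have Hp'B : p' \in b :: B0 by exact: mem_last.
have HBs B : B \in Bs -> foldl fs [:: n.+2] B = [::].
  by move=> HB1; apply: HB; rewrite inE HB1 orbT.
have S1 : forall u, u \in U ++ b :: B0 -> 0 < u <= p'.
  move=> u; rewrite mem_cat => /orP [Hu'|Hu'].
    by have := HU u Hu'; lia.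
  have := H4B u Hu'; have := Hlast u Hu'; lia.
have S2 : uniq (U ++ b :: B0).
  rewrite cat_uniq Hu (sorted_uniq ltn_trans ltnn HsBl) andbT.
  apply/hasPn => z Hz /=; apply/negP => Hz'.
  have := HU z Hz'; have := H4B z Hz; lia.
have S3 : size Bs <= p'.
  by have HszBs : (size Bs).+1 <= p := Hsz; lia.
have S4 : forall z, z \in flatten Bs -> 4 ^ p' < z.
  by move=> z Hz; have := Hrel p' z Hp'B Hz.
have [Fs' [HsF' [Hi' Hh']]] := IH (U ++ b :: B0) p' S1 S2 S3 HsR S4 HBs.
set bits := fun y => [seq P u y | u <- U] ++ [seq P y (head 0 F) | F <- Fs'].
set col := fun y => bin (bits y).
set r := 2 ^ (size U + size Bs).
have HszU : size U <= p.
  have := uniq_leq_size Hu (s2 := iota 1 p); rewrite size_iota; apply.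
  by move=> u Hu'; rewrite mem_iota; have := HU u Hu'; lia.
have Hr : r <= b.
  have : r <= 4 ^ p.
    rewrite /r -(@expnM 2 2 p) mul2n -addnn; apply: leq_pexp2l => //.
    by have HszBs : (size Bs).+1 <= p := Hsz; lia.
  by have := H4B b (mem_head _ _); lia.
have Hcol z : col z < r.
  by rewrite /col /r; have := bin_lt (bits z); rewrite /bits size_cat !size_map HsF'.
have [c Hc] := PH (m := n.+1) (col := col) (expn_gt0 2 _) (sub_sorted Rx_R2 HsB) (fun z _ => Hcol z) Hr HBl.
set F := [seq z <- B0 | col z == c] in Hc.
have HFB z : z \in F -> z \in b :: B0.
  by rewrite mem_filter => /andP [_ Hz]; rewrite inE Hz orbT.
have HFc z : z \in F -> col z = c by rewrite mem_filter => /andP [/eqP -> _].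
have HFl : foldl fs [:: n] F = [::].
  apply: (LM (sorted_filter R2_trans _ (path_sorted (sub_sorted Rx_R2 HsB)))
    (isT : sorted leq [:: n]) (isT : sorted leq [:: n.+1]) _ _ Hc).
  - right; exists n.+1; split; first by rewrite /cnt /= eqxx; lia.
    move=> j Hj; rewrite /cnt /=; have -> : (n == j) = false by apply/negbTE; lia.
    have -> : (n.+1 == j) = false by apply/negbTE; lia. done.
  - by move=> z Hz; have := H4B z (HFB z Hz); rewrite /=; lia.
have Hbits x x' : x \in F -> x' \in F -> bits x = bits x'.
  move=> Hx Hx'; apply: bin_inj; first by rewrite !size_cat !size_map.
  by have := HFc x Hx; have := HFc x' Hx'; rewrite /col => -> ->.
have HbitsU x x' : x \in F -> x' \in F ->
    [seq P u x | u <- U] = [seq P u x' | u <- U] /\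
    [seq P x (head 0 F0) | F0 <- Fs'] = [seq P x' (head 0 F0) | F0 <- Fs'].
  move=> Hx Hx'; have := Hbits x x' Hx Hx'; move/eqP; rewrite /bits eqseq_cat ?size_map //.
  by case/andP => /eqP -> /eqP ->.
exists (F :: Fs'); split; first by rewrite /= HsF'.
split.
- case=> [|i] /= Hi.
    split; first exact: HFB.
    split; first by apply: sorted_filter; [exact: ltn_trans|exact: path_sorted HsBl].
    split; first exact: HFl.
    move=> u y y' Hu' Hy Hy'; have [HU' _] := HbitsU y y' Hy Hy'.
    by move/eq_in_map: HU'; apply.
  have [T1 [T2 [T3 T4]]] := Hi' i Hi.
  split => //; split => //; split => //.
  by move=> u y y' Hu'; apply: T4; rewrite mem_cat Hu'.
- case=> [|i] [|j] //= Hij Hj; last first.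
    by move=> x x' y y'; apply: Hh'.
  move=> x x' y y' Hx Hx' Hy Hy'.
  have [_ [_ [HFj HT]]] := Hi' j Hj.
  case E: (nth [::] Fs' j) HFj HT Hy Hy' => [//|h s] HFj HT Hy Hy'.
  have HxB u : u \in F -> u \in U ++ b :: B0 by move=> Hu'; rewrite mem_cat HFB ?orbT.
  rewrite (HT x y h (HxB x Hx) Hy (mem_head _ _)) (HT x' y' h (HxB x' Hx') Hy' (mem_head _ _)).
  have [_ H2] := HbitsU x x' Hx Hx'.
  have := congr1 (nth false ^~ j) H2.
  by rewrite !(nth_map [::]) ?HsF' // E.
Qed.
End G.


Lemma onat_large L k : k <= size L -> foldl fs (nseq k 0) L = [::].
Proof.
elim: L k => [|x L IH] [|k] //= Hk; rewrite ?foldl_nil //; exact: IH.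
Qed.

Lemma block_order Bs i j x y : sorted Rx (flatten Bs) -> i < j -> j < size Bs ->
  x \in nth [::] Bs i -> y \in nth [::] Bs j -> x < y.
Proof.
move=> Hs Hij Hj Hx Hy; apply: Rx_ltn.
rewrite -(cat_take_drop j Bs) flatten_cat in Hs.
have [_ _ Hr] := sorted_cat_rel Rx_trans Hs; apply: Hr.
  apply/flattenP; exists (nth [::] Bs i) => //.
  rewrite -(nth_take _ Hij); apply: mem_nth; by rewrite size_takel ?(ltnW Hj).
apply/flattenP; exists (nth [::] Bs j) => //.
rewrite -[j in nth _ Bs j]addn0 -nth_drop; apply: mem_nth; by rewrite size_drop subn_gt0.
Qed.

Unset Implicit Arguments.

Theorem lemma2p6 (n d : nat) (X : seq nat) :
  finset_nat X ->
  large (oexp n.+3) X ->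
  exp_sparse X ->
  d <= minX X ->
  forall P : nat -> nat -> bool,
    exists Fs : seq (seq nat), grouping (oexp n) (onat d) X P Fs.
Proof.
move=> HX HL [H3 Hsp] Hd P.
case: X HX HL H3 Hsp Hd => [//|x0 X'] HX /eqP HL H3 Hsp /= Hd.
rewrite /= cats0 in HL.
have [Bs [W [HsB [HB HX']]]] := blocks HL.
set Bd := take d Bs.
have HsBd : size Bd = d by rewrite size_takel // HsB.
have HRX : sorted Rx (x0 :: X').
  apply: (@sub_in_sorted _ (mem (x0 :: X')) ltn Rx _ (x0 :: X') _ HX).
  - by move=> a b Ha Hb Hab; apply: Hsp.
  - by apply/allP.
have Hx0 z : z \in X' -> 4 ^ x0 < z.
  move=> Hz; apply: Hsp; rewrite ?inE ?Hz ?eqxx ?orbT //.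
  by have /allP := order_path_min ltn_trans HX; apply.
have HsF : sorted Rx (flatten Bd).
  have := path_sorted HRX; rewrite HX' -(cat_take_drop d Bs) flatten_cat -catA.
  by case/cat_sorted2.
have HinX z : z \in flatten Bd -> z \in x0 :: X'.
  move=> Hz; rewrite inE HX' -(cat_take_drop d Bs) flatten_cat -catA mem_cat Hz.
  by rewrite orbT.
have G1 : forall u, u \in [::] -> 0 < u <= x0 by [].
have G2 : size Bd <= x0 by rewrite HsBd.
have G3 : forall z, z \in flatten Bd -> 4 ^ x0 < z.
  move=> z Hz; apply: Hx0.
  by rewrite HX' -(cat_take_drop d Bs) flatten_cat -catA mem_cat Hz.
have G4 : forall B, B \in Bd -> foldl fs [:: n.+2] B = [::].
  by move=> B HB'; apply: HB; exact: mem_take HB'.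
have [Fs [HsF' [Hi Hh]]] := @G n P Bd [::] x0 G1 isT G2 HsF G3 G4.
rewrite HsBd in HsF' Hi Hh.
have HFne i : i < d -> exists a s, nth [::] Fs i = a :: s.
  move=> Hid; have [_ [_ [HL' _]]] := Hi i Hid.
  by case: (nth [::] Fs i) HL' => [//|a s] _; exists a, s.
exists Fs; split; last split; last split; last split.
- move=> i; rewrite HsF' => Hid; have [T1 [T2 _]] := Hi i Hid.
  split => // z Hz; apply: HinX; apply/flattenP; exists (nth [::] Bd i).
    by apply: mem_nth; rewrite HsBd.
  exact: T1.
- move=> i j Hij; rewrite HsF' => Hj.
  have Hid : i < d by lia.
  have [a [s Ea]] := HFne i Hid; have [b [t Eb]] := HFne j Hj.
  have [T1 _] := Hi i Hid; have [U1 _] := Hi j Hj.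
  rewrite /maxX /minX Ea Eb /=.
  apply: (block_order HsF Hij); first by rewrite HsBd.
    by apply: T1; rewrite Ea mem_last.
  by apply: U1; rewrite Eb mem_head.
- move=> i; rewrite HsF' => Hid; have [_ [_ [T3 _]]] := Hi i Hid.
  by rewrite /large T3.
- by rewrite /large /onat onat_large // size_map HsF'.
- move=> i j Hij; rewrite HsF' => Hj; exact: Hh.
Qed.
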